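(* Let $\mathbb{F}$ be a field, $d\geq3$ and $V$ a vector space over $\mathbb{F}$ of dimension $d+1$. Let $E^*_0,\dots,E^*_d$ be a system of mutually orthogonal idempotents in $\mathrm{End}(V)$ and $A\in\mathrm{End}(V)$ with $E^*_iAE^*_j=0$ if $|i-j|>1$ and $E^*_iAE^*_j\neq0$ if $|i-j|=1$. Assume $A$ is multiplicity-free and bipartite with primitive idempotents $E_0,\dots,E_d$ and eigenvalues $\theta_0,\dots,\theta_d$. Let $\theta^*_0,\dots,\theta^*_d\in\mathbb{F}$ be mutually distinct and $A^*=\sum_i\theta^*_iE^*_i$. Assume $E_0$ is normalizing, $(E_0,E_1)$ is a tail, and $E_2$ is the vertex of $\Delta$ other than $E_0$ adjacent to $E_1$. Then for $1\le i\le d-1$, $$\theta_0(\theta^*_{i+1}-\theta^*_1)(\theta^*_{i-1}-\theta^*_1)+\theta_1(\theta^*_i-\theta^*_0)(\theta^*_{d-1}-\theta^*_{i+1}-\theta^*_{i-1}+\theta^*_1)-\theta_2(\theta^*_i-\theta^*_0)(\theta^*_d-\theta^*_i)=0.$$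
   Context: A system of mutually orthogonal idempotents: $E^*_iE^*_j=\delta_{ij}E^*_i$, $\operatorname{rank}E^*_i=1$. $A$ multiplicity-free: $d+1$ distinct eigenvalues in $\mathbb{F}$; $E_i$ is the projection onto the $\theta_i$-eigenspace along the other eigenspaces. Bipartite: $\operatorname{tr}(E^*_iA)=0$ for all $i$. $\Delta$: graph on $E_0,\dots,E_d$ with $E_i\neq E_j$ adjacent iff $E_iA^*E_j\neq0$. $(E_0,E_1)$ is a tail if $E_0$ is adjacent to no vertex other than $E_1$ and $E_1$ is adjacent to at most one vertex other than $E_0$. The matrix $Y$ representing $A$ w.r.t. a basis $v_0,\dots,v_d$ satisfies $Av_j=\sum_iY_{ij}v_i$. An eigenvalue $\theta$ of $A$ is normalizing if some basis with $v_i\in E^*_iV$ makes every row sum of the matrix representing $A$ equal to $\theta$; $E_i$ is normalizing if $\theta_i$ is. *)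

(* Defs.v *)
From HB Require Import structures.
From mathcomp Require Import all_boot all_order all_algebra.
Set Implicit Arguments. Unset Strict Implicit. Unset Printing Implicit Defensive.
Import Order.TTheory GRing.Theory Num.Theory.
Local Open Scope ring_scope.

(* V = 'cV[F]_(d.+1) (column vectors), End(V) = 'M[F]_(d.+1), acting by A *m v. *)

Definition orth_idem_system (F : fieldType) (n : nat) (Es : 'I_n -> 'M[F]_n) : Prop :=
  (forall i j, Es i *m Es j = if i == j then Es i else 0) /\
  (forall i, \rank (Es i) = 1%N).

Definition mult_free_eigs (F : fieldType) (n : nat) (A : 'M[F]_n) (th : 'I_n -> F) : Prop :=
  injective th /\ (forall i, eigenvalue A (th i)).

Definition primitive_idempotents (F : fieldType) (n : nat) (A : 'M[F]_n)
    (th : 'I_n -> F) (E : 'I_n -> 'M[F]_n) : Prop :=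
  forall i j (v : 'cV[F]_n), A *m v = th j *: v ->
    E i *m v = if i == j then v else 0.

Definition bipartite (F : fieldType) (n : nat) (A : 'M[F]_n) (Es : 'I_n -> 'M[F]_n) : Prop :=
  forall i, \tr (Es i *m A) = 0.

Definition Delta_adj (F : fieldType) (n : nat) (E : 'I_n -> 'M[F]_n) (As : 'M[F]_n)
    (i j : 'I_n) : Prop :=
  i != j /\ E i *m As *m E j != 0.

Definition is_tail (F : fieldType) (n : nat) (E : 'I_n -> 'M[F]_n) (As : 'M[F]_n)
    (a b : 'I_n) : Prop :=
  (forall k, Delta_adj E As a k -> k = b) /\
  (forall k l, k != a -> l != a -> Delta_adj E As b k -> Delta_adj E As b l -> k = l).

(* theta is normalizing: some basis v_0..v_d (columns of P) with v_i in E*_i V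
   such that the matrix Y representing A (A v_j = sum_i Y_ij v_i) has all row sums theta *)
Definition normalizing (F : fieldType) (n : nat) (A : 'M[F]_n) (Es : 'I_n -> 'M[F]_n)
    (theta : F) : Prop :=
  exists (P Y : 'M[F]_n),
    P \in unitmx /\
    (forall i, Es i *m col i P = col i P) /\
    A *m P = P *m Y /\
    (forall i, \sum_j Y i j = theta).

(* Main.v *)
Require Import Defs.
From HB Require Import structures.
From mathcomp Require Import all_boot all_order all_algebra.
From mathcomp Require Import ring zify.
Import Order.TTheory GRing.Theory Num.Theory.
Local Open Scope ring_scope.
Set Implicit Arguments. Unset Strict Implicit. Unset Printing Implicit Defensive.

Lemma mul_deltaR (F : fieldType) m n p (A : 'M[F]_(m, n)) (i : 'I_n) (j : 'I_p) r c :
  (A *m delta_mx i j) r c = (c == j)%:R * A r i.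
Proof.
rewrite mxE (bigD1 i) //= big1 ?addr0 => [|l /negbTE nl]; rewrite !mxE ?nl //=.
  by rewrite eqxx /= mulrC.
by rewrite mulr0.
Qed.

Lemma mul_deltaL (F : fieldType) m n p (A : 'M[F]_(n, p)) (i : 'I_m) (j : 'I_n) r c :
  (delta_mx i j *m A) r c = (r == i)%:R * A j c.
Proof.
rewrite mxE (bigD1 j) //= big1 ?addr0 => [|l /negbTE nl]; rewrite !mxE ?nl ?andbF ?mul0r //=.
by rewrite eqxx andbT.
Qed.

Lemma delta_A_delta (F : fieldType) n (A : 'M[F]_n) k j :
  delta_mx k k *m A *m delta_mx j j = A k j *: delta_mx k j.
Proof.
apply/matrixP=> r c; rewrite mul_deltaR mul_deltaL !mxE.
by case: (r == k); case: (c == j); rewrite /= ?mul1r ?mul0r ?mulr0 ?mulr1.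
Qed.

Lemma col_mulE (F : fieldType) m n p (A : 'M[F]_(m, n)) (B : 'M[F]_(n, p)) c r :
  (A *m col c B) r 0 = (A *m B) r c.
Proof. by rewrite colE mulmxA mul_deltaR eqxx mul1r. Qed.

Lemma col_entry (F : fieldType) m n (B : 'M[F]_(m, n)) c r : col c B r 0 = B r c.
Proof. by rewrite mxE. Qed.

Lemma eB (F : fieldType) m n (u v : 'M[F]_(m, n)) i j : (u - v) i j = u i j - v i j.
Proof. by rewrite !mxE. Qed.
Lemma eD (F : fieldType) m n (u v : 'M[F]_(m, n)) i j : (u + v) i j = u i j + v i j.
Proof. by rewrite !mxE. Qed.
Lemma eZ (F : fieldType) m n a (u : 'M[F]_(m, n)) i j : (a *: u) i j = a * u i j.
Proof. by rewrite !mxE. Qed.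
Lemma e0 (F : fieldType) m n i j : (0 : 'M[F]_(m, n)) i j = 0.
Proof. by rewrite !mxE. Qed.


Lemma stepA_Es (F : fieldType) n (Es : 'I_n -> 'M[F]_n) (P : 'M[F]_n) :
  P \in unitmx ->
  (forall i j, Es i *m Es j = if i == j then Es i else 0) ->
  (forall i, Es i *m col i P = col i P) ->
  forall k, Es k = P *m delta_mx k k *m invmx P.
Proof.
move=> uP orth hc k.
suff ->: P *m delta_mx k k = Es k *m P by rewrite mulmxK.
apply/matrixP=> r c; rewrite mul_deltaR.
rewrite -col_mulE.
rewrite -hc mulmxA orth; case: (eqVneq k c) => [->|nkc].
  by rewrite hc mul1r mxE.

by rewrite mul0mx mxE mul0r.
Qed.


Lemma eig_indep (F : fieldType) n (Y N : 'M[F]_n) (th : 'I_n -> F) :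
  injective th -> (forall i, row i N *m Y = th i *: row i N) ->
  (forall i, row i N != 0) -> N \in unitmx.
Proof.
move=> inj hN nz.
rewrite -row_free_unit -kermx_eq0; apply/idPn => /rowV0Pn [c /sub_kermxP cK c0].
have [j cj] : exists j, c 0 j != 0.
  apply/existsP; apply: contraR c0 => /existsPn h; apply/eqP/rowP => k.
  by rewrite mxE; apply/eqP; rewrite -[_ == _]negbK h.
have dir := @mxdirect_sum_eigenspace F _ n Y predT th (in2W inj).
move/mxdirect_sumsP: dir => /(_ j isT) dj.
have : (row j N <= eigenspace Y (th j) :&: \sum_(i | predT i && (i != j)) eigenspace Y (th i))%MS.
  rewrite sub_capmx; apply/andP; split; first by apply/eigenspaceP.
  move: cK; rewrite mulmx_sum_row (bigD1 j) //= => /eqP; rewrite addr_eq0 => /eqP h.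
  have -> : row j N = (c 0 j)^-1 *: (- \sum_(i < n | i != j) c 0 i *: row i N).
    by rewrite -h scalerA mulVf // scale1r.
  apply: scalemx_sub; rewrite -scaleN1r; apply: scalemx_sub; apply: summx_sub => i ij; apply: scalemx_sub.
  by apply: (sumsmx_sup i) => //; apply/eigenspaceP.
by rewrite dj submx0 (negbTE (nz j)).
Qed.


Fixpoint ellf (F : fieldType) d (Y : 'M[F]_d.+1) (m : nat) : F :=
  if m is m'.+1 then ellf Y m' * Y (inord m) (inord m') / Y (inord m') (inord m) else 1.

Lemma ell_exists (F : fieldType) d (Y : 'M[F]_d.+1) :
 (forall i j : 'I_d.+1, ((i.+1 < j) || (j.+1 < i))%N -> Y i j = 0) ->
 (forall i j : 'I_d.+1, ((i.+1 == j) || (j.+1 == i))%N -> Y i j != 0) ->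
 exists l : 'rV[F]_d.+1, (forall j, l 0 j != 0) /\ (forall i j, Y i j * l 0 j = l 0 i * Y j i).
Proof.
move=> Y0 Ynz.
have nzf : forall m, (m <= d)%N -> ellf Y m != 0.
  elim=> [|m IH] hm /=; first exact: oner_neq0.
  rewrite !mulf_neq0 ?invr_eq0 ?IH //; try (by apply: ltnW);
   apply: Ynz; rewrite !inordK; lia.
exists (\row_j ellf Y j); split=> [j|i j]; rewrite !mxE.
  by apply: nzf; rewrite -ltnS.
have [eij|nij] := eqVneq i j; first by rewrite eij mulrC.
have [hj|hj] := eqVneq (val j) i.+1.
  have -> : ellf Y j = ellf Y i * Y j i / Y i j.
    by rewrite hj /= -hj !inord_val.
  have nz : Y i j != 0 by apply: Ynz; rewrite hj eqxx.
  by field.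
have [hi|hi] := eqVneq (val i) j.+1.
  have -> : ellf Y i = ellf Y j * Y i j / Y j i.
    by rewrite hi /= -hi !inord_val.
  have nz : Y j i != 0 by apply: Ynz; rewrite hi eqxx.
  by field.
rewrite !Y0 ?mul0r ?mulr0 //; move: nij hi hj; case: i => [a ha]; case: j => [b hb] /=;
  rewrite -(inj_eq val_inj) /= => /eqP hab hi hj; apply/orP; lia.
Qed.


Lemma rowNY (F : fieldType) n (Y N : 'M[F]_n) (th : 'I_n -> F) :
  (forall i, row i N *m Y = th i *: row i N) ->
  N *m Y = diag_mx (\row_i th i) *m N.
Proof.
move=> h; apply/matrixP=> i c; rewrite mul_diag_mx.
have -> : (N *m Y) i c = (row i (N *m Y)) 0 c by rewrite [in RHS]mxE.
by rewrite row_mul h !mxE.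
Qed.

Lemma diag_left (F : fieldType) n (G X : 'M[F]_n) k j :
  (forall a b, a != b -> G a b = 0) -> (G *m X) k j = G k k * X k j.
Proof.
move=> hG; rewrite mxE (bigD1 k) //= big1 ?addr0 // => l lk.
by rewrite hG ?mul0r // eq_sym.
Qed.

Lemma diag_right (F : fieldType) n (G X : 'M[F]_n) k j :
  (forall a b, a != b -> G a b = 0) -> (X *m G) k j = X k j * G j j.
Proof.
move=> hG; rewrite mxE (bigD1 j) //= big1 ?addr0 // => l lk.
by rewrite hG ?mulr0.
Qed.

Lemma B_sym (F : fieldType) n (Y N : 'M[F]_n) (th : 'I_n -> F) (l dr : 'rV[F]_n) :
 injective th -> N \in unitmx -> (forall i, row i N *m Y = th i *: row i N) ->
 (forall j, l 0 j != 0) -> (forall i j, Y i j * l 0 j = l 0 i * Y j i) ->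
 forall k j, (N *m diag_mx dr *m invmx N) k j = 0 -> (N *m diag_mx dr *m invmx N) j k = 0.
Proof.
move=> inj uN hN l0 hl.
set Th := diag_mx (\row_i th i).
have hNY := rowNY hN.
set L := diag_mx l.
have hYL : Y *m L = L *m Y^T.
  by apply/matrixP=> i j; rewrite mul_mx_diag mul_diag_mx !mxE hl.
set G := N *m L *m N^T.
have hG : Th *m G = G *m Th.
  rewrite /G !mulmxA -hNY -!mulmxA [Y *m _]mulmxA hYL !mulmxA.
  rewrite -!mulmxA -trmx_mul hNY trmx_mul tr_diag_mx !mulmxA //.
have Gd : forall a b, a != b -> G a b = 0.
  move=> a b ab.
  have : th a * G a b = G a b * th b.
    by have := congr1 (fun M : 'M[F]_n => M a b) hG; rewrite mul_diag_mx mul_mx_diag !mxE.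
  move=> /eqP; rewrite -subr_eq0 -[G a b * th b]mulrC -mulrBl mulf_eq0 subr_eq0.
  by case/orP => [/eqP /inj ab'|/eqP //]; rewrite ab' eqxx in ab.
have uL : L \in unitmx.
  rewrite unitmxE det_diag unitfE; apply/prodf_neq0 => i _; exact: l0.
have uG : G \in unitmx by rewrite /G !unitmx_mul uN uL unitmx_tr uN.
have Gnz : forall a, G a a != 0.
  move=> a; apply/negP => /eqP Ga.
  have : (delta_mx 0 a : 'rV[F]_n) *m G = 0.
    apply/rowP => c; rewrite mul_deltaL eqxx mul1r [RHS]mxE.
    have [<-|ac] := eqVneq a c; first by rewrite Ga.
    by rewrite Gd.
  move/(congr1 (fun M : 'rV[F]_n => M *m invmx G)); rewrite -mulmxA mulmxV // mulmx1 mul0mx.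
  by move/matrixP => /(_ 0 a); rewrite !mxE !eqxx /= => /eqP; rewrite oner_eq0.
set B := N *m diag_mx dr *m invmx N.
have hBG : B *m G = N *m (diag_mx dr *m L) *m N^T.
  by rewrite /B /G -!mulmxA (mulmxA (invmx N)) mulVmx // mul1mx.
have sym : (B *m G)^T = B *m G.
  rewrite hBG !trmx_mul trmxK /L !tr_diag_mx diag_mx_comm !mulmxA.
  done.
have GT : G^T = G by rewrite /G !trmx_mul trmxK /L tr_diag_mx mulmxA.
move=> k j Bkj.
have := congr1 (fun M : 'M[F]_n => M j k) sym.
rewrite trmx_mul GT (diag_right (G:=G)) // (diag_left (G:=G)) // [B^T j k]mxE Bkj mulr0 => /esym /eqP.
by rewrite mulf_eq0 (negbTE (Gnz k)) orbF => /eqP.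
Qed.


Lemma sum2 (F : fieldType) n (f : 'I_n -> F) a b :
  a != b -> (forall l, l != a -> l != b -> f l = 0) -> \sum_l f l = f a + f b.
Proof.
move=> ab h; rewrite (bigD1 a) //= (bigD1 b) 1?eq_sym //= big1 ?addr0 // => l /andP [lb la].
exact: h.
Qed.

Lemma sum1 (F : fieldType) n (f : 'I_n -> F) a :
  (forall l, l != a -> f l = 0) -> \sum_l f l = f a.
Proof.
by move=> h; rewrite (bigD1 a) //= big1 ?addr0 // => l la; apply: h.
Qed.

Lemma unit_inj (F : fieldType) n (N : 'M[F]_n) (z : 'cV[F]_n) :
  N \in unitmx -> N *m z = 0 -> z = 0.
Proof. by move=> uN h; rewrite -(mulKmx uN z) h mulmx0. Qed.

Lemma col_eqs (F : fieldType) n (Y N : 'M[F]_n) (th ths : 'I_n -> F) (i0 i1 i2 : 'I_n) :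
 injective th -> injective ths -> N \in unitmx ->
 (forall i, row i N *m Y = th i *: row i N) ->
 (forall i, \sum_j Y i j = th i0) ->
 i0 != i1 -> i0 != i2 -> i1 != i2 ->
 let B := N *m diag_mx (\row_i ths i) *m invmx N in
 (forall k, k != i0 -> k != i1 -> B k i0 = 0) ->
 (forall k, k != i0 -> k != i1 -> k != i2 -> B k i1 = 0) ->
 exists g lam mu, forall j,
   (Y *m (diag_mx (\row_i ths i) *m (const_mx 1 : 'cV[F]_n))) j 0 = th i1 * ths j + g /\
   (Y *m (diag_mx (\row_i ths i) *m diag_mx (\row_i ths i) *m (const_mx 1 : 'cV[F]_n))) j 0
     = th i2 * ths j ^+ 2 + lam * ths j + mu.
Proof.
move=> inj injs uN hN hrs n01 n02 n12 B hB0 hB1.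
have n10 : i1 != i0 by rewrite eq_sym.
have n20 : i2 != i0 by rewrite eq_sym.
have n21 : i2 != i1 by rewrite eq_sym.
set D := diag_mx (\row_i ths i).
set one : 'cV[F]_n := const_mx 1.
have hNY := rowNY hN.
have NYE : forall (v : 'cV[F]_n) k, (N *m (Y *m v)) k 0 = th k * (N *m v) k 0.
  by move=> v k; rewrite mulmxA hNY -mulmxA mul_diag_mx mxE mxE.
have hY1 : Y *m one = th i0 *: one.
  by apply/colP => j; rewrite !mxE -(hrs j) mulr1; apply: eq_bigr => l _; rewrite mxE mulr1.
set Nv := N *m one.
have Nv0 : forall k, k != i0 -> Nv k 0 = 0.
  move=> k k0; have := NYE one k; rewrite hY1 -scalemxAr mxE => /eqP.
  rewrite -subr_eq0 -mulrBl mulf_eq0 subr_eq0 => /orP [/eqP /inj e|/eqP //].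
  by rewrite e eqxx in k0.
have c0 : Nv i0 0 != 0.
  apply/negP => /eqP c0.
  have : one = 0.
    apply: (unit_inj uN); apply/colP => k; rewrite [RHS]mxE.
    have [->|k0] := eqVneq k i0; [exact: c0 | exact: Nv0].
  by move/colP => /(_ i0); rewrite !mxE => /eqP; rewrite oner_eq0.
have NBv : forall v : 'cV[F]_n, N *m (D *m v) = B *m (N *m v).
  by move=> v; rewrite /B -!mulmxA (mulmxA (invmx N)) mulVmx // mul1mx.
set tv := D *m one.
set Ntv := N *m tv.
have Ntv0 : forall k, k != i0 -> k != i1 -> Ntv k 0 = 0.
  move=> k k0 k1; rewrite /Ntv /tv NBv mxE (sum1 (a := i0)).
    by rewrite hB0 // mul0r.
  by move=> l l0; rewrite Nv0 // mulr0.
set sv := D *m D *m one.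
set Nsv := N *m sv.
have Nsv0 : forall k, k != i0 -> k != i1 -> k != i2 -> Nsv k 0 = 0.
  move=> k k0 k1 k2; rewrite /Nsv /sv -mulmxA NBv NBv mxE big1 // => l _.
  have [->|l0] := eqVneq l i0; first by rewrite hB0 // mul0r.
  have [->|l1] := eqVneq l i1; first by rewrite hB1 // mul0r.
  rewrite [(B *m _) l 0]mxE (sum1 (a := i0)); first by rewrite (hB0 l) // mul0r mulr0.
  by move=> m m0; rewrite Nv0 // mulr0.
have tvE : forall j, tv j 0 = ths j.
  by move=> j; rewrite /tv mul_diag_mx !mxE mulr1.
have svE : forall j, sv j 0 = ths j ^+ 2.
  by move=> j; rewrite /sv -mulmxA -/tv mul_diag_mx [LHS]mxE tvE mxE expr2.
set c := Nv i0 0.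
set a0 := Ntv i0 0.
set a1 := Ntv i1 0.
have a1nz : a1 != 0.
  apply/negP => /eqP a10.
  have : tv = (a0 / c) *: one.
    apply/eqP; rewrite -subr_eq0; apply/eqP; apply: (unit_inj uN).
    apply/colP => k; rewrite mulmxBr -scalemxAr eB eZ e0 -/Ntv -/Nv.
    have [->|k0] := eqVneq k i0; first by rewrite -/a0 -/c mulfVK // subrr.
    have [->|k1] := eqVneq k i1; first by rewrite -/a1 a10 Nv0 // mulr0 subrr.
    by rewrite Ntv0 // Nv0 // mulr0 subrr.
  move=> e; have := congr1 (fun v : 'cV[F]_n => v i0 0) e.
  have := congr1 (fun v : 'cV[F]_n => v i1 0) e.
  rewrite /= eZ !tvE !mxE => h1 h0; move: h0; rewrite -h1 => /injs /eqP; by rewrite (negbTE n01).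
set b0 := Nsv i0 0.
set b1 := Nsv i1 0.
pose g := (th i0 - th i1) * a0 / c.
pose lam := (th i1 - th i2) * b1 / a1.
pose mu := ((th i0 - th i2) * b0 - lam * a0) / c.
have E1 : Y *m tv = th i1 *: tv + g *: one.
  apply/eqP; rewrite -subr_eq0; apply/eqP; apply: (unit_inj uN).
  apply/colP => k; rewrite !mulmxBr !mulmxDr -!scalemxAr !eB !eD !eZ e0 NYE -/Ntv -/Nv.
  have [->|k0] := eqVneq k i0.
    rewrite -/a0 -/c /g; field; exact: c0.
  have [->|k1] := eqVneq k i1; first by rewrite Nv0 // mulr0 addr0 subrr.
  by rewrite Ntv0 // Nv0 // !mulr0 addr0 subrr.
have E2 : Y *m sv = th i2 *: sv + lam *: tv + mu *: one.
  apply/eqP; rewrite -subr_eq0; apply/eqP; apply: (unit_inj uN).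
  apply/colP => k; rewrite !mulmxBr !mulmxDr -!scalemxAr !eB !eD !eZ e0 NYE -/Ntv -/Nv -/Nsv.
  have [->|k0] := eqVneq k i0.
    rewrite -/a0 -/c -/b0 /mu; field; exact: c0.
  have [->|k1] := eqVneq k i1.
    rewrite -/a1 -/b1 Nv0 // /lam; field; exact: a1nz.
  have [->|k2] := eqVneq k i2.
    by rewrite Nv0 1?eq_sym // Ntv0 1?eq_sym // !mulr0 !addr0 subrr.
  by rewrite Nsv0 // Ntv0 // Nv0 // !mulr0 !addr0 subrr.
exists g, lam, mu => j; split.
  by rewrite -/tv E1 eD !eZ tvE mxE mulr1.
by rewrite -/sv E2 !eD !eZ svE tvE mxE mulr1.
Qed.


Lemma alg_final (F : fieldType) (t0 t1 t2 g lam mu x y P Q R S0 S1 Sm Sd : F) :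
 x + y - t0 = 0 ->
 t0 * S1 - (t1 * S0 + g) = 0 ->
 t0 * Sm - (t1 * Sd + g) = 0 ->
 x * P + y * R - (t1 * Q + g) = 0 ->
 t0 * S1^+2 - (t2 * S0^+2 + lam * S0 + mu) = 0 ->
 t0 * Sm^+2 - (t2 * Sd^+2 + lam * Sd + mu) = 0 ->
 x * P^+2 + y * R^+2 - (t2 * Q^+2 + lam * Q + mu) = 0 ->
 S0 != Sd ->
 t0 * (R - S1) * (P - S1) + t1 * (Q - S0) * (Sm - R - P + S1) - t2 * (Q - S0) * (Sd - Q) = 0.
Proof.
move=> h f1 f2 f3 f4 f5 f6 nS.
have key : (Sd - S0) * (t0 * (R - S1) * (P - S1) + t1 * (Q - S0) * (Sm - R - P + S1)
    - t2 * (Q - S0) * (Sd - Q)) =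
  - (Sd - S0) * ((x * P^+2 + y * R^+2 - (t2 * Q^+2 + lam * Q + mu))
     - (P + R) * (x * P + y * R - (t1 * Q + g)) + P * R * (x + y - t0)
     - (t0 * S1^+2 - (t2 * S0^+2 + lam * S0 + mu)) + (P + R) * (t0 * S1 - (t1 * S0 + g)))
  + (Q - S0) * ((t0 * Sm^+2 - (t2 * Sd^+2 + lam * Sd + mu)) - (t0 * S1^+2 - (t2 * S0^+2 + lam * S0 + mu)))
  - (Q - S0) * (Sm + S1) * ((t0 * Sm - (t1 * Sd + g)) - (t0 * S1 - (t1 * S0 + g))).
  ring.
move: key; rewrite h f1 f2 f3 f4 f5 f6 !(subr0, mulr0, addr0, mul0r, add0r, oppr0) => /eqP.
by rewrite mulf_eq0 subr_eq0 eq_sym (negbTE nS) /= => /eqP.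
Qed.


Lemma row_exp2 (F : fieldType) d (Y : 'M[F]_d.+1) (f : 'I_d.+1 -> F) (j : nat) :
 (forall i j : 'I_d.+1, ((i.+1 < j) || (j.+1 < i))%N -> Y i j = 0) ->
 (forall i, Y i i = 0) -> (1 <= j)%N -> (j < d)%N ->
 \sum_l Y (inord j) l * f l =
   Y (inord j) (inord j.-1) * f (inord j.-1) + Y (inord j) (inord j.+1) * f (inord j.+1).
Proof.
move=> Y0 Yd j1 jd; apply: sum2.
  by rewrite -(inj_eq val_inj) /= !inordK //; lia.
move=> l la lb; have [e|ne] := eqVneq l (inord j); first by rewrite -e Yd mul0r.
rewrite Y0 ?mul0r //; move: la lb ne; rewrite -!(inj_eq val_inj) /= !inordK; try lia.
Qed.

Lemma row_exp1 (F : fieldType) d (Y : 'M[F]_d.+1) (f : 'I_d.+1 -> F) (j k : nat) :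
 (forall i j : 'I_d.+1, ((i.+1 < j) || (j.+1 < i))%N -> Y i j = 0) ->
 (forall i, Y i i = 0) -> (j <= d)%N -> (k <= d)%N ->
 (forall m, (m <= d)%N -> m != j -> m != k -> (m.+1 < j)%N || (j.+1 < m)%N) ->
 \sum_l Y (inord j) l * f l = Y (inord j) (inord k) * f (inord k).
Proof.
move=> Y0 Yd jd kd hm; apply: sum1 => l lk.
have [e|ne] := eqVneq l (inord j); first by rewrite -e Yd mul0r.
rewrite Y0 ?mul0r //; move: lk ne; rewrite -!(inj_eq val_inj) /= !inordK // => lk lj.
have := hm l (ltn_ord l)  lj lk; case/orP => h; apply/orP; [right|left]; exact: h.
Qed.

Lemma final_Y (F : fieldType) d (Y : 'M[F]_d.+1) (t0 t1 t2 g lam mu : F) (ths : 'I_d.+1 -> F) :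
 (forall i j : 'I_d.+1, ((i.+1 < j) || (j.+1 < i))%N -> Y i j = 0) ->
 (forall i, Y i i = 0) ->
 (forall i, \sum_j Y i j = t0) ->
 (forall j, \sum_l Y j l * ths l = t1 * ths j + g) ->
 (forall j, \sum_l Y j l * ths l ^+ 2 = t2 * ths j ^+ 2 + lam * ths j + mu) ->
 ths (inord 0) != ths (inord d) -> (2 <= d)%N ->
 forall i : nat, (1 <= i <= d.-1)%N ->
    t0 * (ths (inord i.+1) - ths (inord 1)) * (ths (inord i.-1) - ths (inord 1))
    + t1 * (ths (inord i) - ths (inord 0))
        * (ths (inord d.-1) - ths (inord i.+1) - ths (inord i.-1) + ths (inord 1))
    - t2 * (ths (inord i) - ths (inord 0)) * (ths (inord d) - ths (inord i))
    = 0.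
Proof.
move=> Y0 Yd rs E1 E2 nS d2 i /andP [i1 id].
have rs' : forall j, \sum_l Y j l * 1 = t0 by move=> j; rewrite -(rs j); apply: eq_bigr => l _; rewrite mulr1.
have r0 : forall f : 'I_d.+1 -> F, \sum_l Y (inord 0) l * f l = Y (inord 0) (inord 1) * f (inord 1).
  move=> f; apply: row_exp1 => //; [lia|] => m md m0 m1; apply/orP; lia.
have rd : forall f : 'I_d.+1 -> F, \sum_l Y (inord d) l * f l = Y (inord d) (inord d.-1) * f (inord d.-1).
  move=> f; apply: row_exp1 => //; [lia|] => m md m0 m1; apply/orP; lia.
have ri : forall f : 'I_d.+1 -> F, \sum_l Y (inord i) l * f l =
   Y (inord i) (inord i.-1) * f (inord i.-1) + Y (inord i) (inord i.+1) * f (inord i.+1).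
  by move=> f; apply: row_exp2 => //; lia.
have h0 := rs' (inord 0); rewrite r0 mulr1 in h0.
have hd := rs' (inord d); rewrite rd mulr1 in hd.
have hi := rs' (inord i); rewrite ri !mulr1 in hi.
apply: (@alg_final F t0 t1 t2 g lam mu (Y (inord i) (inord i.-1)) (Y (inord i) (inord i.+1))).
- by rewrite hi subrr.
- by rewrite -(E1 (inord 0)) r0 h0 subrr.
- by rewrite -(E1 (inord d)) rd hd subrr.
- by rewrite -(E1 (inord i)) ri subrr.
- by rewrite -(E2 (inord 0)) r0 h0 subrr.
- by rewrite -(E2 (inord d)) rd hd subrr.
- by rewrite -(E2 (inord i)) ri subrr.
- exact: nS.
Qed.


Lemma proj_form (F : fieldType) n (E : 'I_n -> 'M[F]_n) (W W' : 'M[F]_n) :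
  W' *m W = 1%:M ->
  (forall i j, E i *m col j W = if i == j then col j W else 0) ->
  forall k, E k = W *m delta_mx k k *m W'.
Proof.
move=> hW hc k.
have WW : W *m W' = 1%:M by apply: mulmx1C.
suff <- : E k *m W = W *m delta_mx k k by rewrite -mulmxA WW mulmx1.
apply/matrixP=> r c; rewrite mul_deltaR -col_mulE hc.
case: (eqVneq k c) => [->|nkc]; first by rewrite mul1r mxE.
by rewrite mxE mul0r.
Qed.

Lemma conj_zero (F : fieldType) n (P Q X : 'M[F]_n) :
  Q *m P = 1%:M -> P *m X *m Q = 0 -> X = 0.
Proof.
move=> QP h.
have := congr1 (fun M => Q *m M *m P) h.
by rewrite !mulmxA QP mul1mx -mulmxA QP mulmx1 mulmx0 mul0mx.
Qed.

Unset Implicit Arguments.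

Theorem proposition8p4 (F : fieldType) (d : nat) (hd : (3 <= d)%N)
    (Es : 'I_d.+1 -> 'M[F]_d.+1) (A : 'M[F]_d.+1)
    (th : 'I_d.+1 -> F) (E : 'I_d.+1 -> 'M[F]_d.+1) (ths : 'I_d.+1 -> F) :
  orth_idem_system Es ->
  (forall i j : 'I_d.+1, ((i.+1 < j) || (j.+1 < i))%N -> Es i *m A *m Es j = 0) ->
  (forall i j : 'I_d.+1, ((i.+1 == j) || (j.+1 == i))%N -> Es i *m A *m Es j != 0) ->
  mult_free_eigs A th ->
  primitive_idempotents A th E ->
  bipartite A Es ->
  injective ths ->
  let As := \sum_i ths i *: Es i in
  normalizing A Es (th (inord 0)) ->
  is_tail E As (inord 0) (inord 1) ->
  Delta_adj E As (inord 1) (inord 2) ->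
  forall i : nat, (1 <= i <= d.-1)%N ->
    th (inord 0) * (ths (inord i.+1) - ths (inord 1)) * (ths (inord i.-1) - ths (inord 1))
    + th (inord 1) * (ths (inord i) - ths (inord 0))
        * (ths (inord d.-1) - ths (inord i.+1) - ths (inord i.-1) + ths (inord 1))
    - th (inord 2) * (ths (inord i) - ths (inord 0)) * (ths (inord d) - ths (inord i))
    = 0.
Proof.
move=> [horth _] hAz hAnz [injth heig] hprim hbip injs As [P [Y [uP [hcol [hAP hrow]]]]]
  [tail1 tail2] adj12.
set Q := invmx P.
have QP : Q *m P = 1%:M by rewrite /Q mulVmx.
have PQ : P *m Q = 1%:M by rewrite /Q mulmxV.
have hEs := stepA_Es uP horth hcol.
have hA : A = P *m Y *m Q by rewrite -hAP mulmxK.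
have hEAE : forall k j, Es k *m A *m Es j = P *m (Y k j *: delta_mx k j) *m Q.
  move=> k j; rewrite !hEs hA -!delta_A_delta.
  rewrite -!mulmxA; congr (P *m _); rewrite !mulmxA; congr (_ *m Q).
  by rewrite -/Q -!(mulmxA _ Q P) QP !mulmx1.

have Y0 : forall i j : 'I_d.+1, ((i.+1 < j) || (j.+1 < i))%N -> Y i j = 0.
  move=> i j h; have := hAz i j h; rewrite hEAE => /(conj_zero QP) /matrixP /(_ i j).
  by rewrite eZ !mxE !eqxx mulr1.
have Ynz : forall i j : 'I_d.+1, ((i.+1 == j) || (j.+1 == i))%N -> Y i j != 0.
  move=> i j h; apply: contra (hAnz i j h) => /eqP y0.
  by rewrite hEAE y0 scale0r mulmx0 mul0mx.
have Yd : forall k, Y k k = 0.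
  move=> k; have := hbip k.
  have -> : Es k *m A = P *m (delta_mx k k *m Y) *m Q.
    by rewrite hEs hA -/Q !mulmxA -(mulmxA _ Q P) QP mulmx1.
  rewrite mxtrace_mulC !mulmxA QP mul1mx /mxtrace (sum1 (a := k)).
    by rewrite mul_deltaL eqxx mul1r.
  by move=> l lk; rewrite mul_deltaL (negbTE lk) mul0r.
have ex : forall i, exists2 u : 'rV[F]_d.+1, u *m A = th i *: u & u != 0.
  by move=> i; apply/eigenvalueP.
have [v hv vnz] := fin_all_exists2 ex.
set N := \matrix_i (v i *m P).
have rowN : forall i, row i N = v i *m P by move=> i; rewrite rowK.
have hN : forall i, row i N *m Y = th i *: row i N.
  by move=> i; rewrite rowN -mulmxA -hAP mulmxA hv scalemxAl.
have Nnz : forall i, row i N != 0.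
  move=> i; rewrite rowN; apply: contra (vnz i) => /eqP h.
  by rewrite -(mulmxK uP (v i)) h mul0mx.
have uN := eig_indep injth hN Nnz.
set Ni := invmx N.
set W := P *m Ni.
set W' := N *m Q.
have W'W : W' *m W = 1%:M.
  by rewrite /W /W' mulmxA -(mulmxA N Q P) QP mulmx1 /Ni mulmxV.
have hNY := rowNY hN.
have hYNi : Y *m Ni = Ni *m diag_mx (\row_i th i).
  rewrite -[Y *m Ni]mul1mx -(mulVmx uN) -/Ni -!mulmxA (mulmxA N Y Ni) hNY.
  by rewrite -mulmxA /Ni mulmxV // mulmx1.
have hAW : A *m W = W *m diag_mx (\row_i th i).
  by rewrite /W mulmxA hAP -mulmxA hYNi mulmxA.
have colW : forall j, A *m col j W = th j *: col j W.
  by move=> j; apply/colP => r; rewrite col_mulE hAW mul_mx_diag eZ col_entry [LHS]mxE [X in _ * X = _]mxE mulrC.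

have hE : forall k, E k = W *m delta_mx k k *m W' :=
  proj_form W'W (fun i j => hprim i j _ (colW j)).
set D := diag_mx (\row_i ths i).
have hAs : As = P *m D *m Q.
  rewrite /As /D diag_mx_sum_delta mulmx_sumr mulmx_suml; apply: eq_bigr => i _.
  by rewrite hEs -scalemxAr -scalemxAl mxE.
set B := N *m D *m Ni.
have hEAsE : forall a k, E a *m As *m E k = W *m (B a k *: delta_mx a k) *m W'.
  have eB : W' *m (P *m D *m Q) *m W = B.
    rewrite /W' /W /B !mulmxA -(mulmxA N Q P) QP mulmx1.
    by rewrite -(mulmxA _ Q P) QP mulmx1.
  by move=> a k; rewrite !hE hAs -delta_A_delta -eB !mulmxA.
have Enz : forall a k, B a k != 0 -> E a *m As *m E k != 0.
  move=> a k; apply: contra => /eqP h; move: h; rewrite hEAsE => /(conj_zero W'W).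
  by move=> /matrixP /(_ a k); rewrite eZ !mxE !eqxx mulr1 => ->.
have i01 : (inord 0 : 'I_d.+1) != inord 1 by rewrite -(inj_eq val_inj) /= !inordK //; lia.
have i02 : (inord 0 : 'I_d.+1) != inord 2 by rewrite -(inj_eq val_inj) /= !inordK //; lia.
have i12 : (inord 1 : 'I_d.+1) != inord 2 by rewrite -(inj_eq val_inj) /= !inordK //; lia.
have B0 : forall k, k != inord 0 -> k != inord 1 -> B (inord 0) k = 0.
  move=> k k0 k1; case: (eqVneq (B (inord 0) k) 0) => // nz.
  have k0' : inord 0 != k by rewrite eq_sym.
  have := tail1 k (conj k0' (Enz _ _ nz)) => ek.
  by rewrite ek eqxx in k1.
have B1 : forall k, k != inord 0 -> k != inord 1 -> k != inord 2 -> B (inord 1) k = 0.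
  move=> k k0 k1 k2; case: (eqVneq (B (inord 1) k) 0) => // nz.
  have k1' : inord 1 != k by rewrite eq_sym.
  have i20 : (inord 2 : 'I_d.+1) != inord 0 by rewrite eq_sym.
  have := tail2 k (inord 2) k0 i20 (conj k1' (Enz _ _ nz)) adj12.
  by move=> ek; rewrite ek eqxx in k2.
have [l [l0 hl]] := ell_exists Y0 Ynz.
have Bs := B_sym (dr := \row_i ths i) injth uN hN l0 hl.
have [g [lam [mu H]]] := col_eqs (i2 := inord 2) injth injs uN hN hrow i01 i02 i12
  (fun k k0 k1 => Bs _ _ (B0 k k0 k1)) (fun k k0 k1 k2 => Bs _ _ (B1 k k0 k1 k2)).
apply: (final_Y Y0 Yd hrow (g := g) (lam := lam) (mu := mu)).
- move=> j; have [h1 _] := H j; rewrite -h1 mxE; apply: eq_bigr => m _.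
  by rewrite mul_diag_mx !mxE mulr1.
- move=> j; have [_ h2] := H j; rewrite -h2 mxE; apply: eq_bigr => m _.
  by rewrite -mulmxA !mul_diag_mx !mxE mulr1 expr2.
- apply/negP => /eqP /injs /eqP; rewrite -(inj_eq val_inj) /= !inordK //; lia.
- lia.
Qed.
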